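(* Let $Z$ be the tree obtained from four disjoint 3-stars $S_0,S_1,S_2,S_3$, where $S_i$ has center $u_i$ and leaves $a_i,b_i,c_i$, by identifying $c_0$ with $c_1$, $a_0$ with $c_2$, and $a_1$ with $c_3$ (so $Z$ has $13$ vertices, maximum degree $3$ and diameter $8$). Then $\gamma^{\rm ID}(Z)=8<\frac23|V(Z)|$.
   Context: An identifying code of a graph $G$ is a set $C\subseteq V(G)$ such that every vertex $v$ has $N[v]\cap C\neq\emptyset$ and for all distinct $u,v$, $N[u]\cap C \ne N[v]\cap C$, where $N[v]$ is the closed neighborhood; $\gamma^{\rm ID}(G)$ is its minimum size. *)

(* Defs.v *)
From mathcomp Require Import all_boot all_order.
Set Implicit Arguments. Unset Strict Implicit. Unset Printing Implicit Defensive.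

Definition cnbhd (T : finType) (e : rel T) (v : T) : {set T} :=
  [set w | (w == v) || e v w].

Definition is_idcode (T : finType) (e : rel T) (C : {set T}) : bool :=
  [forall v, cnbhd e v :&: C != set0] &&
  [forall u, forall v, (u != v) ==> (cnbhd e u :&: C != cnbhd e v :&: C)].

(* Minimum size of an identifying code; #|T|.+1 if none exists. *)
Definition gammaID (T : finType) (e : rel T) : nat :=
  \big[minn/#|T|.+1]_(C : {set T} | is_idcode e C) #|C|.

(* The tree Z on vertex set 'I_13, labelled:
   0 u0, 1 u1, 2 u2, 3 u3, 4 a0 (= c2), 5 b0, 6 c0 (= c1),
   7 a1 (= c3), 8 b1, 9 a2, 10 b2, 11 a3, 12 b3. *)
Definition Z_edges : seq (nat * nat) :=
  [:: (0,4); (0,5); (0,6);      (* star S0: u0 - a0, b0, c0 *)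
      (1,6); (1,7); (1,8);      (* star S1: u1 - c1=c0, a1, b1 *)
      (2,9); (2,10); (2,4);     (* star S2: u2 - a2, b2, c2=a0 *)
      (3,11); (3,12); (3,7)].   (* star S3: u3 - a3, b3, c3=a1 *)

Definition Z_adj : rel 'I_13 :=
  fun x y => ((nat_of_ord x, nat_of_ord y) \in Z_edges) ||
             ((nat_of_ord y, nat_of_ord x) \in Z_edges).

(* Main.v *)
Require Import Defs.
From mathcomp Require Import all_boot all_order.

Definition adjn (v w : nat) : bool :=
  ((v, w) \in Z_edges) || ((w, v) \in Z_edges).

Definition NB : seq (seq nat) :=
  [:: [:: 0;4;5;6]; [:: 1;6;7;8]; [:: 2;9;10;4]; [:: 3;11;12;7];
      [:: 4;0;2]; [:: 5;0]; [:: 6;0;1]; [:: 7;1;3]; [:: 8;1];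
      [:: 9;2]; [:: 10;2]; [:: 11;3]; [:: 12;3]].

Lemma NB_all : all (fun v => all (fun w =>
   (w \in nth [::] NB v) == (w == v) || adjn v w) (iota 0 13)) (iota 0 13).
Proof. by vm_compute. Qed.

Lemma NB_ok v w : v < 13 -> w < 13 -> (w \in nth [::] NB v) = (w == v) || adjn v w.
Proof.
move=> hv hw; have /allP/(_ v) := NB_all.
rewrite mem_iota hv => /(_ isT) /allP /(_ w); rewrite mem_iota hw => /(_ isT).
by move/eqP.
Qed.

Lemma NB_lt_all : all (fun v => all (fun w => w < 13) (nth [::] NB v)) (iota 0 13).
Proof. by vm_compute. Qed.

Lemma NB_lt v w : w \in nth [::] NB v -> w < 13.
Proof.
case: (ltnP v 13) => hv; last by rewrite nth_default.
have /allP/(_ v) := NB_lt_all; rewrite mem_iota hv => /(_ isT) /allP; apply.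
Qed.

Definition chk (s : seq bool) : bool :=
 all (fun v => has (nth false s) (nth [::] NB v)) (iota 0 13) &&
 all (fun u => all (fun v => (u != v) ==> has (fun w => nth false s w &&
     ((w \in nth [::] NB u) != (w \in nth [::] NB v))) (iota 0 13)) (iota 0 13)) (iota 0 13).

Fixpoint allseqs (n : nat) : seq (seq bool) :=
  match n with
  | 0 => [:: [::]]
  | n'.+1 => map (cons true) (allseqs n') ++ map (cons false) (allseqs n')
  end.

Lemma allseqsP s : s \in allseqs (size s).
Proof.
elim: s => [|b s IH] //=; rewrite mem_cat.
by case: b; rewrite (map_f _ IH) ?orbT.
Qed.

Lemma brute : all (fun s => (count id s < 8) ==> ~~ chk s) (allseqs 13).
Proof. by vm_compute. Qed.

Lemma iota13 x : (x \in iota 0 13) = (x < 13).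
Proof. by rewrite mem_iota. Qed.

Lemma inordv (w : 'I_13) : @inord 12 (val w) = w.
Proof. by apply: val_inj; rewrite /= inordK. Qed.

Lemma inordK' w : w < 13 -> val (@inord 12 w) = w.
Proof. exact: inordK. Qed.

Definition sq (C : {set 'I_13}) := [seq (@inord 12 i \in C) | i <- iota 0 13].

Lemma nth_sq (C : {set 'I_13}) w : w < 13 -> nth false (sq C) w = (inord w \in C).
Proof. by move=> hw; rewrite (nth_map 0) ?size_iota // nth_iota. Qed.

Lemma cnbhdE v (w : 'I_13) : v < 13 ->
  (w \in cnbhd Z_adj (inord v)) = (val w \in nth [::] NB v).
Proof.
move=> hv; rewrite inE NB_ok ?ltn_ord //.
by rewrite -[w == _](inj_eq val_inj) /= /Z_adj /adjn inordK.
Qed.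

Lemma card_sq (C : {set 'I_13}) : #|C| = count id (sq C).
Proof.
rewrite /sq count_map -val_enum_ord count_map cardE /enum_mem size_filter -enumT.
rewrite [X in _ = count _ X](_ : _ = enum 'I_13); last first.
  by apply/all_filterP/allP.
by apply: eq_count => i /=; rewrite (inordv i).
Qed.

Lemma idcode_chk (C : {set 'I_13}) : is_idcode Z_adj C = chk (sq C).
Proof.
apply/andP/andP => [[/forallP H1 /forallP H2] | [/allP H1 /allP H2]]; split.
- apply/allP => v; rewrite iota13 => hv.
  have /set0Pn [w] := H1 (inord v); rewrite inE => /andP [wN wC].
  apply/hasP; exists (val w); first by rewrite -cnbhdE.
  by rewrite nth_sq ?ltn_ord // (inordv w).
- apply/allP => u; rewrite iota13 => hu; apply/allP => v.
  rewrite iota13 => hv; apply/implyP => uv.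
  have /forallP /(_ (inord v)) := H2 (inord u).
  have -> : (inord u != inord v :> 'I_13).
    by rewrite -val_eqE /= !inordK.
  move/implyP => /(_ isT) Hne; apply/negPn/negP => /hasPn Hn; move/negP: Hne; apply.
  apply/eqP/setP => w; rewrite !in_setI !cnbhdE //.
  have := Hn (val w); rewrite iota13 ltn_ord nth_sq ?ltn_ord // (inordv w) => /(_ isT).
  by case: (w \in C); rewrite /= ?andbT ?andbF // => /negPn/eqP ->.
- apply/forallP => v; have := H1 (val v); rewrite iota13 ltn_ord.
  move=> /(_ isT) /hasP [w wN]; have hw := NB_lt _ _ wN.
  rewrite nth_sq // => wC; apply/set0Pn; exists (inord w).
  by rewrite in_setI wC andbT -{1}(inordv v) cnbhdE ?ltn_ord // inordK'.
- apply/forallP => u; apply/forallP => v; apply/implyP => uv.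
  have := H2 (val u); rewrite iota13 ltn_ord => /(_ isT) /allP /(_ (val v)).
  rewrite iota13 ltn_ord => /(_ isT); rewrite val_eqE uv implyTb => /hasP [w _].
  move=> /andP [wC Hd]; have hw : w < 13.
    by move: wC; rewrite ltnNge; apply: contraTN => h; rewrite nth_default // size_map size_iota.
  move: wC; rewrite nth_sq // => wC; apply/negP => /eqP /setP /(_ (inord w)).
  rewrite !in_setI wC !andbT -{1}(inordv u) -{1}(inordv v) !cnbhdE ?ltn_ord // !inordK' //.
  by move=> E; move: Hd; rewrite E eqxx.
Qed.

Lemma lower (C : {set 'I_13}) : is_idcode Z_adj C -> 8 <= #|C|.
Proof.
rewrite idcode_chk card_sq => H; rewrite leqNgt; apply/negP => Hlt.
have /allP /(_ (sq C)) := brute.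
have -> : 13 = size (sq C) by rewrite size_map size_iota.
by move=> /(_ (allseqsP _)); rewrite Hlt H.
Qed.

Definition L0 := [:: 0;1;2;3;4;7;9;11].
Definition C0 : {set 'I_13} := [set i : 'I_13 | val i \in L0].

Lemma sqC0 : sq C0 = [seq (i \in L0) | i <- iota 0 13].
Proof.
apply/eq_in_map => i; rewrite iota13 => hi.
by rewrite inE inordK'.
Qed.

Lemma C0_id : is_idcode Z_adj C0.
Proof. by rewrite idcode_chk sqC0; vm_compute. Qed.

Lemma C0_card : #|C0| = 8.
Proof. by rewrite card_sq sqC0; vm_compute. Qed.

Lemma bigmin_le (I : eqType) (r : seq I) (P : pred I) (F : I -> nat) x j :
  j \in r -> P j -> \big[minn/x]_(i <- r | P i) F i <= F j.
Proof.
elim: r => [|a r IH] //= jr Pj; rewrite big_cons.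
move: jr; rewrite inE => /orP [/eqP <- | jr]; first by rewrite Pj geq_minl.
case: (P a); last exact: IH.
by rewrite (leq_trans (geq_minr _ _)) ?IH.
Qed.

Lemma g8 : gammaID Z_adj = 8.
Proof.
apply/eqP; rewrite eqn_leq; apply/andP; split.
  rewrite /gammaID; apply: (@leq_trans #|C0|); last by rewrite C0_card.
  by apply: bigmin_le; rewrite ?mem_index_enum ?C0_id.
rewrite /gammaID; elim/big_ind: _ => //; first by rewrite card_ord.
  by move=> x y hx hy; rewrite leq_min hx hy.
exact: lower.
Qed.

Theorem mainTheorem15 :
  gammaID Z_adj = 8 /\ 3 * gammaID Z_adj < 2 * #|'I_13|.
Proof. by rewrite g8 card_ord. Qed.
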